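(* Let $X$ be a real reflexive Banach space and let $h\in\mathcal{H}$ satisfy $h^{\ast}\circ i\le h$. Assume that $\mathrm{dom}(h)=\mathrm{dom}(h^{\ast}\circ i)$. Then $(\mathcal{A}^{\infty}h)^{\ast}\circ i=\mathcal{A}^{\infty}h$.
   Context: $X^{\ast}$ is the dual of $X$ with pairing $\langle\cdot,\cdot\rangle$. The dual of $X\times X^{\ast}$ is identified with $X^{\ast}\times X$ via $\langle (x,x^{\ast}),(y^{\ast},y)\rangle=\langle x,y^{\ast}\rangle+\langle y,x^{\ast}\rangle$; for $g:X\times X^{\ast}\to\mathbb{R}\cup\{+\infty\}$, $g^{\ast}(y^{\ast},y)=\sup_{(x,x^{\ast})}\{\langle x,y^{\ast}\rangle+\langle y,x^{\ast}\rangle-g(x,x^{\ast})\}$, and $i(x,x^{\ast})=(x^{\ast},x)$. For a maximally monotone $T:X\rightrightarrows X^{\ast}$, $\mathcal{H}(T)$ is the family of lower semicontinuous convex functions $h:X\times X^{\ast}\to\mathbb{R}\cup\{+\infty\}$ with $h(x,x^{\ast})\ge\langle x,x^{\ast}\rangle$ everywhere and $h(x,x^{\ast})=\langle x,x^{\ast}\rangle$ whenever $x^{\ast}\in T(x)$; $\mathcal{H}$ is the union of $\mathcal{H}(T)$ over all maximally monotone $T$. $\mathcal{A}h:=\tfrac12(h+h^{\ast}\circ i)$, $\mathcal{A}^n$ is its $n$-th iterate, and $\mathcal{A}^{\infty}h$ is the pointwise limit (equivalently infimum) of the pointwise non-increasing sequence $\{\mathcal{A}^n h\}_{n\ge1}$.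 $\mathrm{dom}(g)=\{z:g(z)<+\infty\}$. *)

(* Defs.v *)
From HB Require Import structures.
From mathcomp Require Import all_boot all_order all_algebra.
From mathcomp Require Import all_classical all_reals all_analysis.
Set Implicit Arguments. Unset Strict Implicit. Unset Printing Implicit Defensive.
Import Order.TTheory GRing.Theory Num.Theory.
Import numFieldNormedType.Exports.
Local Open Scope classical_set_scope.
Local Open Scope ring_scope.

Section Defs.
Context {R : realType} {X : normedModType R}.

Definition is_dual (f : X -> R) : Prop :=
  (forall (a : R) (x y : X), f (a *: x + y) = a * f x + f y) /\ continuous f.

Definition dnorm (f : X -> R) : R :=
  fine (ereal_sup [set (`|f x|)%:E | x in [set x : X | `|x| <= 1]]).

Definition is_bidual (phi : (X -> R) -> R) : Prop :=
  (forall (a : R) (f g : X -> R), is_dual f -> is_dual g ->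
     phi (fun x => a * f x + g x) = a * phi f + phi g) /\
  (exists C : R, forall f, is_dual f -> `|phi f| <= C * dnorm f).

Definition reflexive_space : Prop :=
  forall phi, is_bidual phi -> exists x : X, forall f, is_dual f -> phi f = f x.

(* Functions on X x X^* are represented as X -> (X -> R) -> \bar R; only
   their values at pairs (x, x^* ) with is_dual x^* matter. *)
Definition conj_i (g : X -> (X -> R) -> \bar R) : X -> (X -> R) -> \bar R :=
  (* (g^* o i)(y, y^* ) = g^*(y^*, y)
       = sup_{(x,x^* ) in X x X^*} <x,y^*> + <y,x^*> - g(x,x^* ) *)
  fun y ystar => ereal_sup [set z | exists (x : X) (xstar : X -> R),
        is_dual xstar /\ z = ((ystar x + xstar y)%:E - g x xstar)%E].

(* Lower semicontinuity on X x X^* for the norm (product) topology,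
   written sequentially (X x X^* is a metric space). *)
Definition lsc_XXs (g : X -> (X -> R) -> \bar R) : Prop :=
  forall (x : X) (f : X -> R) (u : nat -> X) (v : nat -> X -> R),
    is_dual f -> (forall n, is_dual (v n)) ->
    u @ \oo --> x ->
    (fun n => dnorm (fun y => v n y - f y)) @ \oo --> (0 : R) ->
    (g x f <= limn_einf (fun n => g (u n) (v n)))%E.

Definition convex_XXs (g : X -> (X -> R) -> \bar R) : Prop :=
  forall (x1 x2 : X) (f1 f2 : X -> R) (t : R),
    is_dual f1 -> is_dual f2 -> 0 <= t <= 1 ->
    (g (t *: x1 + (1 - t) *: x2)%R (fun y => t * f1 y + (1 - t) * f2 y)%R
      <= t%:E * g x1 f1 + (1 - t)%R%:E * g x2 f2)%E.

Definition is_operator (T : X -> set (X -> R)) : Prop :=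
  forall x f, T x f -> is_dual f.

Definition monotone_op (T : X -> set (X -> R)) : Prop :=
  is_operator T /\
  forall x y f g, T x f -> T y g -> 0 <= f x - f y - g x + g y.

Definition max_monotone (T : X -> set (X -> R)) : Prop :=
  monotone_op T /\
  forall S : X -> set (X -> R), monotone_op S ->
    (forall x, T x `<=` S x) -> S = T.

Definition in_HT (T : X -> set (X -> R)) (h : X -> (X -> R) -> \bar R) : Prop :=
  lsc_XXs h /\ convex_XXs h /\
  (forall x f, is_dual f -> ((f x)%:E <= h x f)%E) /\
  (forall x f, T x f -> h x f = (f x)%:E).

Definition in_H (h : X -> (X -> R) -> \bar R) : Prop :=
  exists T, max_monotone T /\ in_HT T h.

Definition opA (h : X -> (X -> R) -> \bar R) : X -> (X -> R) -> \bar R :=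
  fun x f => ((2^-1)%:E * (h x f + conj_i h x f))%E.

Definition opAinf (h : X -> (X -> R) -> \bar R) : X -> (X -> R) -> \bar R :=
  fun x f => ereal_inf [set iter n.+1 opA h x f | n in [set: nat]].

End Defs.

(* Main.v *)
Require Import Defs.
From mathcomp Require Import all_boot all_order all_algebra.
From mathcomp Require Import all_classical all_reals all_analysis.
From mathcomp Require Import lra.
Import Order.TTheory GRing.Theory Num.Theory.
Import numFieldNormedType.Exports.
Local Open Scope classical_set_scope.
Local Open Scope ring_scope.

Section Aux.
Context {R : realType} {X : normedModType R}.
Local Open Scope ereal_scope.

Lemma conj_ub (g : X -> (X -> R) -> \bar R) y k x f : is_dual f ->
  ((k x + f y)%:E - g x f <= conj_i g y k).
Proof. move=> Hf; apply: ereal_sup_ubound; by exists x, f. Qed.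

Lemma conj_lub (g : X -> (X -> R) -> \bar R) y k M :
  (forall x f, is_dual f -> ((k x + f y)%:E - g x f <= M)) ->
  conj_i g y k <= M.
Proof. move=> H; apply: ge_ereal_sup => z [x [f [Hf ->]]]; exact: H. Qed.

Lemma conj_anti (g1 g2 : X -> (X -> R) -> \bar R) :
  (forall x f, is_dual f -> g1 x f <= g2 x f) ->
  forall y k, conj_i g2 y k <= conj_i g1 y k.
Proof.
move=> H y k; apply: conj_lub => x f Hf.
apply: le_trans (conj_ub _ _ _ _ _ Hf); apply: leeB => //; exact: H.
Qed.

Lemma sub_swap (a : R) (b c : \bar R) : a%:E - b <= c -> a%:E - c <= b.
Proof.
case: b => [b| |]; case: c => [c| |] //=; rewrite ?leey ?leNye //.
by rewrite -!EFinB !lee_fin => H; lra.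
Qed.

Lemma conj2 (g : X -> (X -> R) -> \bar R) y k : is_dual k ->
  conj_i (conj_i g) y k <= g y k.
Proof.
move=> Hk; apply: conj_lub => x f Hf; apply: sub_swap.
by rewrite (addrC (k x)); apply: conj_ub.
Qed.

Lemma half_y : (2^-1 : R)%:E * +oo = +oo.
Proof. by rewrite mulry gtr0_sg ?invr_gt0 // mul1e. Qed.

Lemma E1 (a : R) (u v U V : \bar R) :
  -oo < u -> -oo < v -> -oo < U -> -oo < V ->
  a%:E - u <= V -> a%:E - v <= U ->
  a%:E - (2^-1)%:E * (u + v) <= (2^-1)%:E * (U + V).
Proof.
case: u => [u| |] // _; last first.
  move=> hv _ _ _ _; rewrite addye ?half_y; last by rewrite gt_eqF.
  by rewrite addeNy leNye.
case: v => [v| |] // _; last first.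
  move=> _ _ _ _; rewrite addey // half_y.
  by rewrite addeNy leNye.
case: U => [U| |] // _; last first.
  by move=> hV _ _; rewrite addye ?half_y ?leey // gt_eqF.
case: V => [V| |] // _; last first.
  by move=> _ _; rewrite addey // half_y leey.
rewrite -?EFinB -!EFinD -!EFinM -?EFinB !lee_fin => H1 H2; lra.
Qed.

Lemma E2 (a b : \bar R) : b <= a -> (2^-1)%:E * (a + b) <= a.
Proof.
case: a => [a| |]; case: b => [b| |] //; rewrite ?leey //.
- by rewrite -EFinD -EFinM !lee_fin => H; lra.
- by rewrite addeNy mulrNy gtr0_sg ?invr_gt0 // mul1e.
- by rewrite mulrNy gtr0_sg ?invr_gt0 // mul1e.
Qed.

End Aux.

Section Main.
Context {R : realType} {X : normedModType R}.
Variable h : X -> (X -> R) -> \bar R.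
Local Open Scope ereal_scope.

Definition hn n := iter n (@opA R X) h.

Hypothesis Hlow : forall x f, is_dual f -> -oo < conj_i h x f.
Hypothesis Hsub : forall x f, is_dual f -> conj_i h x f <= h x f.

Lemma F1 n : forall x f, is_dual f ->
  conj_i (hn n) x f <= hn n x f /\ hn n x f <= h x f.
Proof.
elim: n => [|n IH] x f Hf; first by split => //; apply: Hsub.
have lowb : forall y k, is_dual k -> conj_i h y k <= conj_i (hn n) y k.
  by move=> y k _; apply: conj_anti => y0 k0 Hk; case: (IH y0 k0 Hk).
have [H1 H2] := IH x f Hf.
split; last first.
  apply: le_trans H2; exact: E2.
apply: conj_lub => y k Hk; rewrite /hn /= /opA -/(hn n).
have [K1 K2] := IH y k Hk.
apply: E1.
- exact: lt_le_trans (Hlow _ _ Hk) (le_trans (lowb _ _ Hk) K1).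
- exact: lt_le_trans (Hlow _ _ Hk) (lowb _ _ Hk).
- exact: lt_le_trans (Hlow _ _ Hf) (le_trans (lowb _ _ Hf) H1).
- exact: lt_le_trans (Hlow _ _ Hf) (lowb _ _ Hf).
- exact: conj_ub.
- by apply: sub_swap; rewrite (addrC (f y)); apply: conj_ub.
Qed.

Lemma F2 n x f : is_dual f -> hn n.+1 x f <= hn n x f.
Proof.
move=> Hf; rewrite /hn /= /opA -/(hn n).
exact: (E2 (hn n x f) (conj_i (hn n) x f) (proj1 (F1 n _ _ Hf))).
Qed.

Lemma hn_anti n k x f : is_dual f -> hn (n + k) x f <= hn n x f.
Proof.
move=> Hf; elim: k => [|k IH]; first by rewrite addn0.
by rewrite addnS; apply: le_trans (F2 _ _ _ Hf) IH.
Qed.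

Lemma b_mono n k y g : conj_i (hn n) y g <= conj_i (hn (n + k)) y g.
Proof. by apply: conj_anti => x f Hf; apply: hn_anti. Qed.

Lemma Hinf_le n x f : is_dual f -> opAinf h x f <= hn n x f.
Proof.
move=> Hf; apply: le_trans (F2 _ _ _ Hf).
by apply: ereal_inf_lbound; exists n.
Qed.

Lemma Hinf_ge_b m x f : is_dual f -> conj_i (hn m) x f <= opAinf h x f.
Proof.
move=> Hf; apply: le_ereal_inf_tmp => _ [n _ <-].
have [k Hk] : exists k, maxn m n.+1 = (m + k)%N.
  by exists (maxn m n.+1 - m)%N; rewrite subnKC // leq_maxl.
apply: le_trans (b_mono m k x f) _; rewrite -Hk.
apply: le_trans (proj1 (F1 _ _ _ Hf)) _.
have [k' Hk'] : exists k', maxn m n.+1 = (n.+1 + k')%N.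
  by exists (maxn m n.+1 - n.+1)%N; rewrite subnKC // leq_maxr.
by rewrite Hk'; apply: hn_anti.
Qed.

Lemma dir1 y k : is_dual k -> conj_i (opAinf h) y k <= opAinf h y k.
Proof.
move=> Hk; apply: le_ereal_inf_tmp => _ [n _ <-].
apply: le_trans (conj2 (hn n.+1) y k Hk).
by apply: conj_anti => x f Hf; apply: Hinf_ge_b.
Qed.

Hypothesis Hdom : forall x f, is_dual f -> h x f = +oo -> conj_i h x f = +oo.

Local Close Scope ereal_scope.
Lemma dir2 x f : is_dual f -> (opAinf h x f <= conj_i (opAinf h) x f)%E.
Proof.
move=> Hf.
have Hc : forall n, (conj_i (hn n) x f <= conj_i (opAinf h) x f)%E.
  by move=> n; apply: conj_anti => y k Hk; apply: Hinf_le.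
have Hb : forall n, (conj_i h x f <= conj_i (hn n) x f)%E.
  by move=> n; have := b_mono 0 n x f; rewrite add0n.
have Ha : forall n, (conj_i (hn n) x f <= hn n x f)%E /\ (hn n x f <= h x f)%E.
  by move=> n; apply: F1.
have Hl := Hlow x f Hf.
have Hs := Hsub x f Hf.
case Eh: (h x f) => [A| |].
2: { have := Hc 0; rewrite /= (Hdom x f Hf Eh) leye_eq => /eqP ->; exact: leey. }
2: { by move: Hs Hl; rewrite Eh leeNy_eq => /eqP ->. }
case Eb: (conj_i h x f) => [B| |].
2: { by move: Hs; rewrite Eh Eb. }
2: { by move: Hl; rewrite Eb. }
case Ec: (conj_i (opAinf h) x f) => [C| |]; last 2 first.
- exact: leey.
- by have := le_trans (Hb 0) (Hc 0); rewrite Ec Eb.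
pose al n := fine (hn n x f).
pose be n := fine (conj_i (hn n) x f).
have Eb' : forall n, conj_i (hn n) x f = (be n)%:E.
  move=> n; rewrite fineK // fin_numElt; apply/andP; split.
    by apply: (lt_le_trans _ (Hb n)); rewrite Eb ltNyr.
  apply: le_lt_trans (proj1 (Ha n)) _; apply: le_lt_trans (proj2 (Ha n)) _.
  by rewrite Eh ltry.
have Ea : forall n, hn n x f = (al n)%:E.
  move=> n; rewrite fineK // fin_numElt; apply/andP; split.
    by apply: (lt_le_trans _ (le_trans (Hb n) (proj1 (Ha n)))); rewrite Eb ltNyr.
  by apply: le_lt_trans (proj2 (Ha n)) _; rewrite Eh ltry.
have rec : forall n, al n.+1 = (2^-1 * (al n + be n))%R.
  move=> n; have E : (al n.+1)%:E = (2^-1 * (al n + be n))%:E.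
    by rewrite -Ea EFinM EFinD -Ea -Eb'.
  by case: E.
have i1 : forall n, (be n <= al n)%R.
  by move=> n; have := proj1 (Ha n); rewrite Ea Eb' lee_fin.
have i2 : forall n, (be n <= be n.+1)%R.
  by move=> n; have := b_mono n 1 x f; rewrite addn1 !Eb' lee_fin.
have i3 : forall n, (be n <= C)%R.
  by move=> n; have := Hc n; rewrite Ec Eb' lee_fin.
have a0 : al 0 = A by rewrite /al /= Eh.
have b0 : be 0 = B by rewrite /be /= Eb.
have claim : forall n, ((al n - be n) * 2^+n <= A - B)%R.
  elim=> [|n IH]; first by rewrite expr0 mulr1 a0 b0.
  have P0 : (0 < (2:R)^+n)%R by apply: exprn_gt0.
  have := rec n; have := i2 n; have := i1 n; rewrite exprS.
  move: IH P0; set P := (2:R)^+n => IH P0 h1 h2 h3; nra.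
apply/lee_addgt0Pr => e e0.
set m := (Num.truncn ((A - B) / e)).+1.
apply: le_trans (Hinf_le m x f Hf) _; rewrite Ea -EFinD lee_fin.
have t1 : ((A - B) / e < m%:R)%R by apply: truncnS_gt.
have t2 : (m%:R <= (2:R)^+m)%R.
  by rewrite -natrX ler_nat ltnW // ltn_expl.
have t3 : (A - B < e * (2:R)^+m)%R.
  by move: t1; rewrite ltr_pdivrMr // mulrC => /lt_le_trans; apply; rewrite ler_pM2l.
have P0 : (0 < (2:R)^+m)%R by apply: exprn_gt0.
have := claim m; have := i3 m; move: t3 P0; set P := (2:R)^+m => t3 P0 h1 h2.
nra.
Qed.

End Main.


Lemma T_nonempty (R : realType) (X : normedModType R) (T : X -> set (X -> R)) :
  max_monotone T -> exists x0 f0, T x0 f0.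
Proof.
move=> [HT Hmax].
have [//|nT] := pselect (exists x0 f0, T x0 f0).
pose S := fun x : X => [set g : X -> R | x = 0 /\ g = (fun _ => 0)].
have dual0 : is_dual (fun _ : X => (0 : R)).
  by split; [move=> a x y; rewrite mulr0 addr0 | by move=> ?; exact: cvg_cst].
have mS : monotone_op S.
  split; first by move=> x g [_ ->].
  by move=> x y g1 g2 [_ ->] [_ ->]; rewrite !subr0 addr0.
have sub : forall x, T x `<=` S x.
  by move=> x g Tg; exfalso; apply: nT; exists x, g.
have E := Hmax S mS sub.
have : S 0 (fun _ => 0) by split.
by rewrite E => H; exfalso; apply: nT; exists 0, (fun _ => 0).
Qed.

Theorem corollary2p1 (R : realType) (X : completeNormedModType R)
  (h : X -> (X -> R) -> \bar R) :
  @reflexive_space R X ->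
  in_H h ->
  (forall (x : X) (f : X -> R), is_dual f -> (conj_i h x f <= h x f)%E) ->
  (forall (x : X) (f : X -> R), is_dual f ->
     ((h x f < +oo)%E <-> (conj_i h x f < +oo)%E)) ->
  forall (x : X) (f : X -> R), is_dual f ->
    conj_i (opAinf h) x f = opAinf h x f.
Proof.
move=> _ [T [HT [_ [_ [_ HTh]]]]] H3 H4 x f Hf.
have [x0 [f0 Tx0]] := @T_nonempty R X T HT.
have Hf0 : is_dual f0 by case: HT => [[Hop _] _]; exact: Hop Tx0.
have Hlow : forall y k, is_dual k -> (-oo < conj_i h y k)%E.
  move=> y k _; apply: (lt_le_trans _ (conj_ub h y k x0 f0 Hf0)).
  by rewrite HTh // -EFinB ltNyr.
have Hdom : forall y k, is_dual k -> h y k = +oo%E -> conj_i h y k = +oo%E.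
  move=> y k Hk Eh; apply/eqP; rewrite -leye_eq leNgt; apply/negP.
  by move=> /(proj2 (H4 y k Hk)); rewrite Eh ltxx.
apply: le_anti; apply/andP; split.
- exact: (@dir1 R X h Hlow H3 x f Hf).
- exact: (@dir2 R X h Hlow H3 Hdom x f Hf).
Qed.
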